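(* Let $\lambda,\mu\in DP$ with $D_\mu\subseteq D_\lambda$, let $k>1$, and let $T$ be a tableau of shape $D_{\lambda/\mu}$ such that either $c(T)_k=c(T)_{k-1}=0$ or all of the following hold: (1) there is a box $(x,y)$ with $T(x,y)=k-1$ and $T(z,y)\ne k$ for all $z>x$; (2) if $T(x,y)=k$ then there is $z<x$ with $T(z,y)=k-1$; (3) if $T(x,y)=k'$ then $T(x-1,y-1)=(k-1)'$; (4) $T^{(k-1)}$ is fitting; (5) if $c(T)_k>0$ then $T^{(k)}$ is fitting. Then $T$ is $k$-amenable.
   Context: $DP$: partitions with distinct parts (including $\emptyset$). Shifted diagram $D_\lambda=\{(i,j):1\le i\le\ell(\lambda),\ i\le j\le i+\lambda_i-1\}$ (row $i$, column $j$); $D_{\lambda/\mu}=D_\lambda\setminus D_\mu$. Alphabet $\mathcal A=\{1'<1<2'<2<\cdots\}$, $|x|$ unmarked version of a letter. A tableau of shape $D$ is $T:D\to\mathcal A$, weakly increasing along rows and down columns, each unmarked $k$ at most once per column, each marked $k'$ at most once per row; $c(T)_i$ = number of entries $i$ or $i'$. Reading word $w=w_1\cdots w_n$: rows read left to right, from bottom row to top row. $m_i(0)=0$; for $1\le j\le n$, $m_i(j)$ = number of letters $i$ in $w_{n-j+1}\cdots w_n$; for $n<j\le2n$, $m_i(j)=m_i(n)+$ number of letters $i'$ in $w_1\cdots w_{j-n}$. $w$ is $k$-amenable if (a) for $0\le j\le n-1$, $m_k(j)=m_{k-1}(j)$ implies $w_{n-j}\notin\{k,k'\}$; (b) for $n\le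 j\le2n-1$, $m_k(j)=m_{k-1}(j)$ implies $w_{j-n+1}\notin\{k-1,k'\}$; (c) if $j$ is smallest with $w_j\in\{k',k\}$ then $w_j=k$; (d) if $j$ is smallest with $w_j\in\{(k-1)',k-1\}$ then $w_j=k-1$. $T$ is $k$-amenable if $w(T)$ is. $T^{(i)}=\{(x,y):|T(x,y)|=i\}$; its components are border strips; the last box of a border strip $B$ is the $(u,v)\in B$ with $(u+1,v),(u,v-1)\notin B$, and the last box of $T^{(i)}$ is that of its leftmost component; $T^{(i)}$ is fitting if its last box contains $i$. *)

(* Defs.v *)
From mathcomp Require Import all_boot.
Set Implicit Arguments. Unset Strict Implicit. Unset Printing Implicit Defensive.

(* Letters of the alphabet A = {1' < 1 < 2' < 2 < ...}:
   a letter is a pair (n, marked); (n, true) is n', (n, false) is n. *)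
Definition letter := (nat * bool)%type.
Definition unm (n : nat) : letter := (n, false).
Definition mrk (n : nat) : letter := (n, true).
Definition absl (l : letter) : nat := l.1.
(* order key: n' |-> 2n, n |-> 2n+1, so that n' < n < (n+1)' *)
Definition lcode (l : letter) : nat := l.1.*2 + ~~ l.2.

Definition is_DP (la : seq nat) : bool :=
  sorted (fun a b => b < a) la && all (fun x => 0 < x) la.

(* lambda_i (1-indexed) *)
Definition part (la : seq nat) (i : nat) : nat := nth 0 la i.-1.

(* (i,j) in the shifted diagram D_lambda *)
Definition inD (la : seq nat) (i j : nat) : bool :=
  (1 <= i <= size la) && (i <= j <= i + part la i - 1).

Definition inSkew (la mu : seq nat) (i j : nat) : bool :=
  inD la i j && ~~ inD mu i j.

Definition boxpred (la mu : seq nat) : pred (nat * nat) :=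
  fun b => inSkew la mu b.1 b.2.

(* tableau of shape D_{lambda/mu}; T is only relevant on the boxes *)
Definition is_tableau (la mu : seq nat) (T : nat -> nat -> letter) : Prop :=
  (forall i j, inSkew la mu i j -> 0 < absl (T i j)) /\
  (forall i j j', inSkew la mu i j -> inSkew la mu i j' -> j <= j' ->
     lcode (T i j) <= lcode (T i j')) /\
  (forall i i' j, inSkew la mu i j -> inSkew la mu i' j -> i <= i' ->
     lcode (T i j) <= lcode (T i' j)) /\
  (forall i i' j, inSkew la mu i j -> inSkew la mu i' j -> i <> i' ->
     T i j = T i' j -> (T i j).2 = true) /\
  (forall i j j', inSkew la mu i j -> inSkew la mu i j' -> j <> j' ->
     T i j = T i j' -> (T i j).2 = false).

Definition rowboxes (la mu : seq nat) (i : nat) : seq (nat * nat) :=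
  [seq (i, j) | j <- iota i (part la i) & ~~ inD mu i j].

Definition boxes (la mu : seq nat) : seq (nat * nat) :=
  flatten [seq rowboxes la mu i | i <- rev (iota 1 (size la))].

Definition readword (la mu : seq nat) (T : nat -> nat -> letter) : seq letter :=
  [seq T b.1 b.2 | b <- boxes la mu].

Definition content (la mu : seq nat) (T : nat -> nat -> letter) (i : nat) : nat :=
  count (fun l => absl l == i) (readword la mu T).

Definition mcount (w : seq letter) (i j : nat) : nat :=
  if j <= size w then count (pred1 (unm i)) (drop (size w - j) w)
  else count (pred1 (unm i)) w + count (pred1 (mrk i)) (take (j - size w) w).

(* w_j, 1-indexed *)
Definition wlet (w : seq letter) (j : nat) : letter := nth (unm 0) w j.-1.

Definition amenable (w : seq letter) (k : nat) : Prop :=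
  let n := size w in
  (forall j, j < n -> mcount w k j = mcount w k.-1 j ->
     wlet w (n - j) \notin [:: mrk k; unm k]) /\
  (forall j, n <= j < 2 * n -> mcount w k j = mcount w k.-1 j ->
     wlet w (j - n + 1) \notin [:: unm k.-1; mrk k]) /\
  (forall j, 1 <= j <= n -> absl (wlet w j) = k ->
     (forall i, 1 <= i < j -> absl (wlet w i) <> k) -> wlet w j = unm k) /\
  (forall j, 1 <= j <= n -> absl (wlet w j) = k.-1 ->
     (forall i, 1 <= i < j -> absl (wlet w i) <> k.-1) -> wlet w j = unm k.-1).

Definition tab_amenable (la mu : seq nat) (T : nat -> nat -> letter) (k : nat) : Prop :=
  amenable (readword la mu T) k.

Definition Tset (la mu : seq nat) (T : nat -> nat -> letter) (i : nat) : pred (nat * nat) :=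
  fun b => boxpred la mu b && (absl (T b.1 b.2) == i).

Definition adj : rel (nat * nat) := fun a b =>
  ((a.1 == b.1) && ((a.2.+1 == b.2) || (b.2.+1 == a.2))) ||
  ((a.2 == b.2) && ((a.1.+1 == b.1) || (b.1.+1 == a.1))).

Definition conn (S : pred (nat * nat)) (a b : nat * nat) : Prop :=
  S a /\ exists p : seq (nat * nat), [&& path adj a p, all S p & last a p == b].

Definition in_leftmost (S : pred (nat * nat)) (b : nat * nat) : Prop :=
  exists a, S a /\ (forall c, S c -> a.2 <= c.2) /\ conn S a b.

Definition last_box (S : pred (nat * nat)) (b : nat * nat) : Prop :=
  S b /\ ~~ S (b.1 + 1, b.2) /\ ~~ S (b.1, b.2 - 1).

Definition fitting (la mu : seq nat) (T : nat -> nat -> letter) (i : nat) : Prop :=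
  forall b, in_leftmost (Tset la mu T i) b -> last_box (Tset la mu T i) b ->
    T b.1 b.2 = unm i.

(* Main.v *)
Require Import Defs.
From mathcomp Require Import all_boot.
From mathcomp Require Import zify.
Set Implicit Arguments. Unset Strict Implicit.

Definition ltR (c d : nat * nat) : bool := (d.1 < c.1) || ((c.1 == d.1) && (c.2 < d.2)).

Lemma ltR_trans : transitive ltR.
Proof.
move=> [b1 b2] [a1 a2] [c1 c2]; rewrite /ltR /=.
case/orP=> [h|/andP[/eqP e h]]; case/orP=> [h'|/andP[/eqP e' h']]; subst;
  apply/orP; lia.
Qed.

Lemma ltR_irr : irreflexive ltR.
Proof. move=> [a b]; rewrite /ltR /=; lia. Qed.

Lemma rowboxes_pw la mu i : pairwise ltR (rowboxes la mu i).
Proof.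
rewrite /rowboxes pairwise_map.
apply: (@sub_pairwise _ ltn); first by move=> a b /= h; rewrite /ltR /= eqxx h orbT.
rewrite -sorted_pairwise; last exact: ltn_trans.
apply: sorted_filter; first exact: ltn_trans.
exact: iota_ltn_sorted.
Qed.

Lemma mem_rowboxes la mu i c : c \in rowboxes la mu i -> c.1 = i.
Proof. by case/mapP=> j _ ->. Qed.

Lemma boxes_pw la mu : pairwise ltR (boxes la mu).
Proof.
rewrite /boxes; elim: (size la) => [|n IH]; first by [].
have -> : iota 1 n.+1 = iota 1 n ++ [:: n.+1] by rewrite -[n.+1]addn1 iotaD add1n addn1.
rewrite rev_cat /= pairwise_cat IH rowboxes_pw andbT.
rewrite andbT; apply/allrelP=> c d hc /flatten_mapP [i hi hd].
rewrite /ltR (mem_rowboxes hc) (mem_rowboxes hd).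
move: hi; rewrite mem_rev mem_iota; lia.
Qed.

Lemma mem_boxes la mu c : (c \in boxes la mu) = inSkew la mu c.1 c.2.
Proof.
apply/idP/idP.
- case/flatten_mapP=> i; rewrite mem_rev mem_iota => hi.
  case/mapP=> j; rewrite mem_filter mem_iota => /andP[hm hj] ->.
  rewrite /inSkew /inD hm /= andbT; apply/andP; split; lia.
- case: c => i j; rewrite /inSkew /inD /= => /andP[/andP[h1 h2] hm].
  apply/flatten_mapP; exists i; first by rewrite mem_rev mem_iota; lia.
  apply/mapP; exists j => //; rewrite mem_filter mem_iota hm /=; lia.
Qed.

Lemma split_at (s : seq (nat * nat)) p : pairwise ltR s -> p < size s ->
  (forall Q, count Q (take p s) = count (fun c => Q c && ltR c (nth (0,0) s p)) s) /\
  (forall Q, count Q (drop p.+1 s) = count (fun c => Q c && ltR (nth (0,0) s p) c) s) /\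
  (forall c, c \in s -> ltR c (nth (0,0) s p) -> c \in take p s).
Proof.
move=> hpw hp.
have E : s = take p s ++ nth (0,0) s p :: drop p.+1 s by rewrite -drop_nth // cat_take_drop.
move: hpw; rewrite {1 4 7 8}E.
move: (take p s) (drop p.+1 s) (nth (0,0) s p) => t d f.
rewrite pairwise_cat /= => /and3P[/allrelP ha _ /andP[/allP hb _]].
have hta c : c \in t -> ltR c f by move=> hc; apply: ha; rewrite // inE eqxx.
have hdb c : c \in d -> ltR f c by move=> hc; apply: hb.
split; [|split].
- move=> Q; rewrite count_cat /= ltR_irr andbF add0n.
  rewrite (@eq_in_count _ _ (fun=> false) d) ?count_pred0 ?addn0.
    by apply: eq_in_count => c /hta ->; rewrite andbT.
  move=> c /hdb h; apply/negbTE; apply/negP=> /andP[_ h'].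
  by move: (ltR_trans h' h); rewrite ltR_irr.
- move=> Q; rewrite count_cat /= ltR_irr andbF add0n.
  rewrite (@eq_in_count _ _ (fun=> false) t) ?count_pred0 ?add0n.
    by apply: eq_in_count => c /hdb ->; rewrite andbT.
  move=> c /hta h; apply/negbTE; apply/negP=> /andP[_ h'].
  by move: (ltR_trans h h'); rewrite ltR_irr.
- move=> c; rewrite mem_cat inE => /orP[//|/orP[/eqP->|/hdb h]].
    by rewrite ltR_irr.
  by move=> h'; move: (ltR_trans h h'); rewrite ltR_irr.
Qed.

Lemma DP_gap la : is_DP la -> forall i d, i + d < size la -> nth 0 la (i+d) + d <= nth 0 la i.
Proof.
case/andP=> hs _ i; elim=> [|d IH] h; first by rewrite !addn0.
have h1 : nth 0 la (i + d.+1) < nth 0 la (i + d).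
  have := @sorted_ltn_nth _ (fun a b => b < a) _ 0 la hs (i + d) (i + d.+1).
  apply; rewrite ?inE /=; try lia. by move=> a b c h1 h2; apply: ltn_trans h1.
have := IH ltac:(lia); lia.
Qed.

Lemma part_gap la x' x : is_DP la -> 1 <= x' -> x' <= x -> x <= size la ->
  part la x + (x - x') <= part la x'.
Proof.
move=> hd h1 h2 h3; rewrite /part.
have := DP_gap hd (i := x'.-1) (d := x - x') ltac:(lia).
by have -> : x'.-1 + (x - x') = x.-1 by lia.
Qed.

Lemma skew_up la mu x y : is_DP la -> inSkew la mu (x-1) (y-1) -> inSkew la mu x y ->
  inSkew la mu (x-1) y.
Proof.
move=> hd; rewrite /inSkew /inD => /andP[h1 h2] /andP[h3 h4].
have := part_gap hd (x' := x-1) (x := x) ltac:(lia) ltac:(lia) ltac:(lia).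
move: h2; case: (1 <= x - 1 <= size mu) => /=; last by move=> *; lia.
move=> h2 h5; apply/andP; split; first lia.
lia.
Qed.

Lemma skew_row la mu x' y' x y j : is_DP la -> inSkew la mu x' y' -> inSkew la mu x y ->
  x' < x -> y' <= j <= y -> inSkew la mu x' j.
Proof.
move=> hd; rewrite /inSkew /inD => /andP[h1 h2] /andP[h3 h4] h5 h6.
have := part_gap hd (x' := x') (x := x) ltac:(lia) ltac:(lia) ltac:(lia).
move=> h7; apply/andP; split; first lia.
move: h2; case: (1 <= x' <= size mu) => //=.
move=> h2; apply/negP=> h8; move: h2; apply/negP; apply/negPn; lia.
Qed.

Lemma skew_col la mu x' x y z : is_DP la -> is_DP mu -> inSkew la mu x' y -> inSkew la mu x y ->
  x' <= z <= x -> inSkew la mu z y.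
Proof.
move=> hd hm; rewrite /inSkew /inD => /andP[h1 h2] /andP[h3 h4] h5.
have := part_gap hd (x' := z) (x := x) ltac:(lia) ltac:(lia) ltac:(lia).
move=> h7; apply/andP; split; first lia.
apply/negP => h8.
have := part_gap hm (x' := x') (x := z) ltac:(lia) ltac:(lia) ltac:(lia).
move=> h9; move: h2; apply/negP; apply/negPn; lia.
Qed.

Lemma lcode_mrk l i : lcode l = i.*2 -> l = mrk i.
Proof. case: l => n [|]; rewrite /lcode /mrk /= => h; congr (_, _); lia. Qed.

Lemma lcode_unm l i : lcode l = i.*2.+1 -> l = unm i.
Proof. case: l => n [|]; rewrite /lcode /unm /= => h; congr (_, _); lia. Qed.

Lemma lcode_mrkE i : lcode (mrk i) = i.*2. Proof. by rewrite /lcode /= addn0. Qed.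
Lemma lcode_unmE i : lcode (unm i) = i.*2.+1. Proof. by rewrite /lcode /= addn1. Qed.

Lemma absl_lcode l i : (absl l == i) = (i.*2 <= lcode l <= i.*2.+1).
Proof. case: l => n [|]; rewrite /absl /lcode /=; lia. Qed.

Lemma triangle la mu T i z w : is_tableau la mu T ->
  inSkew la mu z w -> inSkew la mu z w.+1 -> inSkew la mu z.+1 w.+1 ->
  absl (T z w) = i -> absl (T z w.+1) = i -> absl (T z.+1 w.+1) = i -> False.
Proof.
move=> [_ [hrow [hcol [hcolU hrowM]]]] h1 h2 h3 /eqP e1 /eqP e2 /eqP e3.
move: e1 e2 e3; rewrite !absl_lcode => e1 e2 e3.
have r := hrow _ _ _ h1 h2 (leqnSn w).
have c := hcol _ _ _ h2 h3 (leqnSn z).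
have [L2|L2] : lcode (T z w.+1) = i.*2 \/ lcode (T z w.+1) = i.*2.+1 by lia.
- have L1 : lcode (T z w) = i.*2 by lia.
  have := hrowM _ _ _ h1 h2 (@n_Sn w).
  by rewrite (lcode_mrk L1) (lcode_mrk L2) => /(_ erefl).
- have L3 : lcode (T z.+1 w.+1) = i.*2.+1 by lia.
  have := hcolU _ _ _ h2 h3 (@n_Sn z).
  by rewrite (lcode_unm L3) (lcode_unm L2) => /(_ erefl).
Qed.

Lemma count_inj (X Y : eqType) (s : seq X) (PB PA : pred X) (g h : X -> Y) (extra : seq Y) :
  {in [seq c <- s | PB c] &, injective g} -> uniq s -> uniq extra ->
  (forall y, y \in extra -> y \notin [seq g c | c <- s & PB c]) ->
  {subset extra ++ [seq g c | c <- s & PB c] <= [seq h c | c <- s & PA c]} ->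
  size extra + count PB s <= count PA s.
Proof.
move=> hinj hs he hnot hsub.
have U : uniq (extra ++ [seq g c | c <- s & PB c]).
  rewrite cat_uniq he (map_inj_in_uniq hinj) filter_uniq // andbT.
  by apply/hasPn=> y hy; apply/negP=> hy2; move: (hnot y hy2); rewrite hy.
by have := uniq_leq_size U hsub; rewrite size_cat !size_map !size_filter.
Qed.

Lemma col_up la mu T a : is_DP la -> is_tableau la mu T ->
  (forall x y, inSkew la mu x y -> T x y = mrk a.+1 ->
     inSkew la mu (x - 1) (y - 1) /\ T (x - 1) (y - 1) = mrk a) ->
  forall m x y, x <= m -> inSkew la mu x y -> T x y = mrk a.+1 ->
  exists z, [/\ z < x, inSkew la mu z y & T z y = unm a].
Proof.
move=> hd hT h3; elim=> [|m IH] x y hx hs hf.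
  by move: hs; rewrite /inSkew /inD; lia.
have [hs' hf'] := h3 x y hs hf.
have hu := skew_up hd hs' hs.
have [_ [hrow [hcol [_ hrowM]]]] := hT.
have r := hrow _ _ _ hs' hu (leq_subr 1 y).
have c := hcol _ _ _ hu hs (leq_subr 1 x).
rewrite hf' lcode_mrkE in r; rewrite hf lcode_mrkE in c.
have hy : y - 1 <> y by move: hs'; rewrite /inSkew /inD; lia.
have neq : lcode (T (x - 1) y) <> a.*2.
  move/lcode_mrk=> e; have := hrowM _ _ _ hs' hu hy; rewrite hf' e => /(_ erefl).
  by [].
have [L|L] : lcode (T (x - 1) y) = a.*2.+1 \/ lcode (T (x - 1) y) = a.+1.*2 by lia.
- exists (x - 1); split => //; [move: hs; rewrite /inSkew /inD; lia | exact: lcode_unm L].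
- have [z [hz1 hz2 hz3]] := IH (x - 1) y ltac:(lia) hu (lcode_mrk L).
  exists z; split => //; lia.
Qed.

Lemma fit_first la mu T i x y : is_DP la -> is_DP mu -> is_tableau la mu T ->
  fitting la mu T i -> inSkew la mu x y -> absl (T x y) = i ->
  (forall c, inSkew la mu c.1 c.2 -> ltR c (x, y) -> absl (T c.1 c.2) <> i) ->
  T x y = unm i.
Proof.
move=> hla hmu hT hfit hxy hi hmin.
have [_ [hrow [hcol _]]] := hT.
have hTf : Tset la mu T i (x, y) by rewrite /Tset /boxpred /= hxy hi eqxx.
apply: (hfit (x, y)).
- exists (x, y); split; [done|split].
  + move=> [x' y'] /andP [hs' /eqP hi'] /=; rewrite leqNgt; apply/negP => hlt.
    have nb : ~~ ltR (x', y') (x, y) by apply/negP => /(hmin (x', y') hs'); apply.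
    have hx : x' < x by move: nb; rewrite /ltR /=; lia.
    rewrite /boxpred /= in hs'.
    have r1 := skew_row (j := y) hla hs' hxy hx ltac:(lia).
    have r2 := skew_row (j := y - 1) hla hs' hxy hx ltac:(lia).
    have c1 := skew_col (z := x'.+1) hla hmu r1 hxy ltac:(lia).
    move/eqP: hi; move/eqP: hi'; rewrite !absl_lcode => hi' hi.
    have a1 := hrow _ _ _ hs' r1 ltac:(lia).
    have a2 := hcol _ _ _ r1 hxy ltac:(lia).
    have a3 := hrow _ _ _ hs' r2 ltac:(lia).
    have a4 := hrow _ _ _ r2 r1 ltac:(lia).
    have a5 := hcol _ _ _ r1 c1 ltac:(lia).
    have a6 := hcol _ _ _ c1 hxy ltac:(lia).
    have ey : (y - 1).+1 = y by move: hxy; rewrite /inSkew /inD; lia.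
    apply: (triangle (i := i) (z := x') (w := y - 1) hT); rewrite ?ey //;
      apply/eqP; rewrite absl_lcode; rewrite /= in hi'; lia.
  + split => //; exists [::]; by rewrite /= eqxx.
- split => //; split.
  + apply/negP => /andP [hs2 /eqP hi2]; apply: (hmin (x + 1, y) hs2 _ hi2).
    rewrite /ltR /=; lia.
  + apply/negP => /andP [hs2 /eqP hi2]; apply: (hmin (x, y - 1) hs2 _ hi2).
    rewrite /ltR /=; move: hxy; rewrite /inSkew /inD; lia.
Qed.

Theorem corollary2p22 (la mu : seq nat) (k : nat) (T : nat -> nat -> letter) :
  is_DP la -> is_DP mu -> (forall i j, inD mu i j -> inD la i j) ->
  1 < k -> is_tableau la mu T ->
  ((content la mu T k = 0 /\ content la mu T k.-1 = 0) \/
   [/\ (* (1) *)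
       (exists x y, [/\ inSkew la mu x y, T x y = unm k.-1 &
          forall z, x < z -> inSkew la mu z y -> T z y <> unm k]),
       (* (2) *)
       (forall x y, inSkew la mu x y -> T x y = unm k ->
          exists z, [/\ z < x, inSkew la mu z y & T z y = unm k.-1]),
       (* (3) *)
       (forall x y, inSkew la mu x y -> T x y = mrk k ->
          inSkew la mu (x - 1) (y - 1) /\ T (x - 1) (y - 1) = mrk k.-1),
       (* (4) *)
       fitting la mu T k.-1 &
       (* (5) *)
       (0 < content la mu T k -> fitting la mu T k)]) ->
  tab_amenable la mu T k.
Proof.
move=> hla hmu hsub hk hT H.
have [a ka] : exists a, k = a.+1 by exists k.-1; lia.
subst k; have ha : 0 < a by lia.
rewrite /= in H.
move: H; rewrite /content /tab_amenable /amenable /readword.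
set s := boxes la mu.
set T' := fun b : nat * nat => T b.1 b.2.
have hpw : pairwise ltR s := boxes_pw la mu.
have hu : uniq s := pairwise_uniq ltR_irr hpw.
have hms c : (c \in s) = inSkew la mu c.1 c.2 := mem_boxes la mu c.
have [hpos [hrow [hcol [hcolU hrowM]]]] := hT.
set w := [seq T' b | b <- s].
have hsz : size w = size s := size_map _ _.
have hnth q : q < size s -> nth (unm 0) w q = T' (nth (0,0) s q).
  by move=> hq; rewrite (nth_map (0,0)).
have hinw q : q < size s -> T' (nth (0,0) s q) \in w.
  by move=> hq; apply: map_f; apply: mem_nth.
rewrite /wlet hsz /=.
case=> [[c1 c0] | [h1 h2 h3 h4 h5]].
  have nok q i : q < size s -> count (fun l => absl l == i) w = 0 ->
      absl (T' (nth (0,0) s q)) <> i.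
    move=> hq /eqP; rewrite eqn0Ngt -has_count => /hasPn /(_ _ (hinw q hq)).
    by move=> /negP h e; apply: h; rewrite e.
  split; [|split; [|split]].
  - move=> j hj _; rewrite hnth; last lia.
    rewrite !inE; apply/negP => /orP[] /eqP e.
      by apply: (nok (size s - j).-1 a.+1 _ c1); [lia | rewrite e].
    by apply: (nok (size s - j).-1 a.+1 _ c1); [lia | rewrite e].
  - move=> j /andP[hj1 hj2] _; rewrite hnth; last lia.
    rewrite !inE; apply/negP => /orP[] /eqP e.
      by apply: (nok (j - size s + 1).-1 a _ c0); [lia | rewrite e].
    by apply: (nok (j - size s + 1).-1 a.+1 _ c1); [lia | rewrite e].
  - move=> j hj; rewrite hnth; last lia.
    by move=> hab; exfalso; apply: (nok j.-1 a.+1 _ c1); [lia | rewrite hab].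
  - move=> j hj; rewrite hnth; last lia.
    by move=> hab; exfalso; apply: (nok j.-1 a _ c0); [lia | rewrite hab].
have colinj (PB : pred (nat * nat)) i : (forall c, PB c -> T' c = unm i) ->
    {in [seq c <- s | PB c] &, injective snd}.
  move=> hP [c1 c2] [d1 d2]; rewrite !mem_filter => /andP[pc hc] /andP[pd hd] /= e.
  subst d2; case: (eqVneq c1 d1) => [->//|ne].
  move: hc hd; rewrite !hms /= => hc hd.
  have ne' : c1 <> d1 by apply/eqP.
  have e1 : T c1 c2 = unm i := hP _ pc.
  have e2 : T d1 c2 = unm i := hP _ pd.
  by have := hcolU c1 d1 c2 hc hd ne'; rewrite e1 e2 => /(_ erefl).
have P1 : forall x y, inSkew la mu x y -> T x y \in [:: mrk a.+1; unm a.+1] ->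
   count (fun c => (T' c == unm a.+1) && ltR (x, y) c) s <
   count (fun c => (T' c == unm a) && ltR (x, y) c) s.
  move=> x y hxy hTf.
  have [z [hz1 hz2 hz3]] : exists z, [/\ z < x, inSkew la mu z y & T z y = unm a].
    move: hTf; rewrite !inE => /orP[/eqP e|/eqP e].
    - exact: (col_up hla hT h3 (leqnn x) hxy e).
    - exact: h2 x y hxy e.
  have := @count_inj _ _ s (fun c => (T' c == unm a.+1) && ltR (x, y) c)
     (fun c => (T' c == unm a) && ltR (x, y) c) snd snd [:: y] _ hu erefl _ _.
  rewrite /= add1n; apply.
  + by apply: (colinj _ a.+1) => c /andP[/eqP e _].
  + move=> y'; rewrite inE => /eqP ->; apply/mapP => [[[c1 c2]]].
    rewrite mem_filter /= => /andP[/andP[/eqP ec hlt] hc] ey; subst c2.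
    move: hc; rewrite hms /= => hc.
    have ec' : T c1 y = unm a.+1 := ec.
    have hc1x : c1 < x by move: hlt; rewrite /ltR /=; lia.
    have hc1 := hcol c1 x y hc hxy (ltnW hc1x).
    move: hTf; rewrite !inE => /orP[/eqP e|/eqP e].
    * by rewrite e ec' lcode_mrkE lcode_unmE in hc1; lia.
    * have ne : c1 <> x by lia.
      by have := hcolU c1 x y hc hxy ne; rewrite ec' e => /(_ erefl).
  + move=> y'; rewrite inE => /orP[/eqP ->|/mapP [[c1 c2] hc ->]].
    * apply/mapP; exists (z, y) => //; rewrite mem_filter /T' /= hz3 eqxx /ltR /= hz1 /= hms /=.
      done.
    * move: hc; rewrite mem_filter => /andP[/andP[/eqP ec hlt] hcs].
      move: hcs; rewrite hms /= => hcs.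
      have [z' [hz1' hz2' hz3']] := h2 c1 c2 hcs ec.
      apply/mapP; exists (z', c2) => //; rewrite mem_filter /T' /= hz3' eqxx hms /= hz2' andbT /=.
      by move: hlt; rewrite /ltR /=; lia.
have P2a : count (fun c => T' c == unm a.+1) s < count (fun c => T' c == unm a) s.
  case: h1 => x0 [y0 [hs0 hT0 hno]].
  have := @count_inj _ _ s (fun c => T' c == unm a.+1) (fun c => T' c == unm a) snd snd
     [:: y0] _ hu erefl _ _.
  rewrite /= add1n; apply.
  + by apply: (colinj _ a.+1) => c /eqP e.
  + move=> y'; rewrite inE => /eqP ->; apply/mapP => [[[c1 c2]]].
    rewrite mem_filter /= => /andP[/eqP ec hc] ey; subst c2.
    move: hc; rewrite hms /= => hc.
    have ec' : T c1 y0 = unm a.+1 := ec.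
    case: (ltngtP c1 x0) => hcx.
    * have := hcol c1 x0 y0 hc hs0 (ltnW hcx).
      by rewrite ec' hT0 !lcode_unmE; lia.
    * by apply: (hno c1 hcx hc).
    * by subst c1; move: ec'; rewrite hT0 => -[]; lia.
  + move=> y'; rewrite inE => /orP[/eqP ->|/mapP [[c1 c2] hc ->]].
    * apply/mapP; exists (x0, y0) => //; rewrite mem_filter /T' /= hT0 eqxx hms /=.
      done.
    * move: hc; rewrite mem_filter => /andP[/eqP ec hcs].
      move: hcs; rewrite hms /= => hcs.
      have [z' [hz1' hz2' hz3']] := h2 c1 c2 hcs ec.
      apply/mapP; exists (z', c2) => //; rewrite mem_filter /T' /= hz3' eqxx hms /= hz2'.
      done.
have P2b : forall x y, inSkew la mu x y -> T x y \in [:: unm a; mrk a.+1] ->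
  count (fun c => (T' c == mrk a.+1) && ltR c (x, y)) s <=
  count (fun c => (T' c == mrk a) && ltR c (x, y)) s.
  move=> x y hxy hTf.
  have hL : a.*2.+1 <= lcode (T x y) <= a.+1.*2.
    by move: hTf; rewrite !inE => /orP[] /eqP ->; rewrite ?lcode_unmE ?lcode_mrkE; lia.
  have := @count_inj _ _ s (fun c => (T' c == mrk a.+1) && ltR c (x, y))
     (fun c => (T' c == mrk a) && ltR c (x, y)) (fun c => (c.1 - 1, c.2 - 1)) id [::] _ hu erefl _ _.
  rewrite /= add0n; apply.
  + move=> [c1 c2] [d1 d2]; rewrite !mem_filter => /andP[_ hc] /andP[_ hd] [e1 e2].
    move: hc hd; rewrite !hms /inSkew /inD /= => hc hd.
    congr pair; lia.
  + by [].
  + move=> y'; rewrite /= map_id => /mapP [[c1 c2] hc ->].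
    move: hc; rewrite mem_filter => /andP[/andP[/eqP ec hlt] hcs].
    move: hcs; rewrite hms /= => hcs.
    have e : T c1 c2 = mrk a.+1 := ec.
    have [hs' hT'] := h3 c1 c2 hcs e.
    rewrite mem_filter hms /= hs' andbT; apply/andP; split.
      by rewrite /T' /= hT'.
    rewrite /ltR /=; move: hlt; rewrite /ltR /= => hlt.
    have hc1 : 1 <= c1 by move: hcs; rewrite /inSkew /inD; lia.
    case: (ltnP x (c1 - 1)) => [//|hle] /=.
    have [[eq1 eq1']|[eq2 eq2']] : (c1 - 1 = x /\ x < c1) \/ (c1 = x /\ c2 < y) by lia.
    * apply/andP; split; first by apply/eqP.
      rewrite ltnNge; apply/negP => hy'.
      move: hs' hT'; rewrite eq1 => hs' hT'.
      by have := hrow x y (c2 - 1) hxy hs' hy'; rewrite hT' lcode_mrkE; lia.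
    * exfalso; subst c1.
      have := hrow x c2 y hcs hxy (ltnW eq2'); rewrite e lcode_mrkE => hl.
      have hTxy : T x y = mrk a.+1 by apply: lcode_mrk; lia.
      have ne : c2 <> y by lia.
      by have := hrowM x c2 y hcs hxy ne; rewrite e hTxy => /(_ erefl).
have FIT : forall i j, fitting la mu T i -> 1 <= j <= size s ->
    absl (nth (unm 0) w j.-1) = i ->
    (forall i', 1 <= i' < j -> absl (nth (unm 0) w i'.-1) <> i) ->
    nth (unm 0) w j.-1 = unm i.
  move=> i j hfit hj; rewrite hnth; last lia.
  move=> hi hmin.
  have hp : j.-1 < size s by lia.
  have [_ [_ hin]] := split_at hpw hp.
  move: hi hin (mem_nth (0,0) hp); rewrite /T'.
  case: (nth (0,0) s j.-1) => x y /= hi hin hxs.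
  apply: (fit_first hla hmu hT hfit _ hi); first by move: hxs; rewrite hms.
  move=> c hc hlt habs.
  have := hin c ltac:(by rewrite hms) hlt.
  case/(nthP (0,0)) => q; rewrite size_takel ?(ltnW hp) //.
  move=> hq; rewrite nth_take // => eq.
  apply: (hmin q.+1); first lia.
  by rewrite /= hnth; [rewrite eq | lia].
split; [|split; [|split]].
- move=> j hj heq; rewrite hnth; last lia.
  set p := (size s - j).-1.
  have hp : p < size s by lia.
  move: heq; rewrite /mcount hsz (ltnW hj) /=.
  have -> : size s - j = p.+1 by lia.
  rewrite /w -map_drop !count_map.
  have [_ [hd _]] := split_at hpw hp; rewrite !hd.
  case: (nth (0,0) s p) (mem_nth (0,0) hp) => x y hxs heq.
  apply/negP => hin.
  have hP := P1 x y ltac:(by move: hxs; rewrite hms) hin.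
  exact: (elimN eqP (negbT (ltn_eqF hP)) heq).
- move=> j /andP[hj1 hj2] heq; rewrite hnth; last lia.
  have -> : (j - size s + 1).-1 = j - size s by lia.
  set p := j - size s.
  have hp : p < size s by lia.
  have em i : mcount w i j = count (pred1 (unm i)) w + count (pred1 (mrk i)) (take p w).
    rewrite /mcount hsz; case: ifP => hle //.
    have -> : p = 0 by rewrite /p; lia.
    have -> : size s - j = 0 by lia.
    by rewrite drop0 take0 /= addn0.
  move: heq; rewrite !em /w -map_take !count_map.
  have [ht _] := split_at hpw hp; rewrite !ht.
  case: (nth (0,0) s p) (mem_nth (0,0) hp) => x y hxs heq.
  apply/negP => hin.
  have hxy : inSkew la mu x y by move: hxs; rewrite hms.
  have hB := P2b x y hxy hin.
  have hlt : count (fun c => T' c == unm a.+1) s + count (fun c => (T' c == mrk a.+1) && ltR c (x, y)) s <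
     count (fun c => T' c == unm a) s + count (fun c => (T' c == mrk a) && ltR c (x, y)) s.
    by move: P2a hB; lia.
  exact: (elimN eqP (negbT (ltn_eqF hlt)) heq).
- move=> j hj habs hmin; apply: (FIT a.+1 j _ hj habs hmin).
  apply: h5; rewrite -has_count; apply/hasP; exists (nth (unm 0) w j.-1).
    by apply: mem_nth; rewrite hsz; lia.
  by rewrite habs.
- move=> j hj habs hmin; exact: (FIT a j h4 hj habs hmin).
Qed.
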